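(* Let $K\in\{\mathbb R,\mathbb C,\mathbb H\}$ and let $(E,d)$ be a metric vector space over $K$ such that $d$ is $C_0$-translation invariant and $(C_1,C_2,C_3)$-lipschitz multiplicative. Define $d_0(x,y)=\int_{\mathbb U}d(ux,uy)\,d\mu(u)$. Then $d_0$ is a distance on $E$ which is $(C_1,C_2+C_3)$-lipschitz equivalent to $d$, is $C_0$-translation invariant and is $(C_1,C_2,C_3)$-lipschitz multiplicative. Moreover $d$ and $d_0$ define the same topology on $E$.
   Context: $K$ has its usual absolute value. A metric vector space is a topological vector space over $K$ whose topology is generated by the metric $d$. $\mathbb U=\{u\in K:|u|=1\}$, $\mu$ the right-invariant Haar probability measure on $\mathbb U$. $d$ is $C_0$-translation invariant if $d(x+z,y+z)\le d(x,y)+C_0$ for all $x,y,z$. For $C_1\ge1$, $C_2,C_3\ge0$, $d$ is $(C_1,C_2,C_3)$-lipschitz multiplicative if $C_1^{-1}|\lambda|d(x,y)-C_2|\lambda|-C_3\le d(\lambda x,\lambda y)\le C_1|\lambda|d(x,y)+C_2|\lambda|+C_3$ for all $\lambda\in K$, $x,y\in E$. A distance $\rho$ is $(A,B)$-lipschitz equivalent to $\sigma$ if $A^{-1}\sigma(x,y)-B\le\rho(x,y)\le A\sigma(x,y)+B$ for all $x,y$. *)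

(* Defs.v *)
From mathcomp Require Import all_boot all_algebra all_classical all_reals all_analysis.
Import GRing.Theory Num.Theory.
Set Implicit Arguments. Unset Strict Implicit. Unset Printing Implicit Defensive.
Local Open Scope ring_scope.
Local Open Scope classical_set_scope.

(* Scalars: the three fields K in {R, C, H} are realised uniformly inside the
   quaternions  H = R^4,  q = ((a, b), (c, e)) = a + b i + c j + e k,
   carrying the product (Borel) sigma-algebra of R^4.
   R  = {((a,0),(0,0))},  C = {((a,b),(0,0))},  H = everything. *)
Notation quat R := ((R * R) * (R * R))%type.

Inductive Kind := Kreal | Kcomplex | Kquat.

Section Quat.
Variable R : realType.

Definition qadd (p q : quat R) : quat R :=
  ((p.1.1 + q.1.1, p.1.2 + q.1.2), (p.2.1 + q.2.1, p.2.2 + q.2.2)).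
Definition qopp (p : quat R) : quat R :=
  ((- p.1.1, - p.1.2), (- p.2.1, - p.2.2)).
Definition qone : quat R := ((1, 0), (0, 0)).
Definition qmul (p q : quat R) : quat R :=
  let: ((a1, b1), (c1, d1)) := p in
  let: ((a2, b2), (c2, d2)) := q in
  ((a1 * a2 - b1 * b2 - c1 * c2 - d1 * d2,
    a1 * b2 + b1 * a2 + c1 * d2 - d1 * c2),
   (a1 * c2 - b1 * d2 + c1 * a2 + d1 * b2,
    a1 * d2 + b1 * c2 - c1 * b2 + d1 * a2)).
Definition qnorm (p : quat R) : R :=
  Num.sqrt (p.1.1 ^+ 2 + p.1.2 ^+ 2 + p.2.1 ^+ 2 + p.2.2 ^+ 2).

Definition Kset (k : Kind) : set (quat R) :=
  match k with
  | Kreal => [set q | q.1.2 = 0 /\ q.2.1 = 0 /\ q.2.2 = 0]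
  | Kcomplex => [set q | q.2.1 = 0 /\ q.2.2 = 0]
  | Kquat => setT
  end.

Definition Uset (k : Kind) : set (quat R) := [set u | Kset k u /\ qnorm u = 1].
End Quat.

Section Metric.
Variable R : realType.

Definition is_distance (T : Type) (rho : T -> T -> R) : Prop :=
  (forall x y, 0 <= rho x y) /\
  (forall x y, rho x y = 0 <-> x = y) /\
  (forall x y, rho x y = rho y x) /\
  (forall x y z, rho x z <= rho x y + rho y z).

Definition metric_open (T : Type) (rho : T -> T -> R) (A : set T) : Prop :=
  forall x, A x -> exists2 r : R, 0 < r & forall y, rho x y < r -> A y.

Definition is_Kvs (k : Kind) (E : zmodType) (sc : quat R -> E -> E) : Prop :=
  (forall l m x, Kset k l -> Kset k m -> sc (qadd l m) x = sc l x + sc m x) /\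
  (forall l x y, Kset k l -> sc l (x + y) = sc l x + sc l y) /\
  (forall l m x, Kset k l -> Kset k m -> sc (qmul l m) x = sc l (sc m x)) /\
  (forall x, sc (qone R) x = x).

(* metric vector space over K: a topological vector space over K whose
   topology is generated by the metric d (continuity of + : E x E -> E and of
   scalar multiplication K x E -> E, written out for the metric topology) *)
Definition metric_vector_space (k : Kind) (E : zmodType)
    (sc : quat R -> E -> E) (d : E -> E -> R) : Prop :=
  is_distance d /\ is_Kvs k sc /\
  (forall x y (e : R), 0 < e -> exists2 r : R, 0 < r &
     forall x' y', d x x' < r -> d y y' < r -> d (x + y) (x' + y') < e) /\
  (forall l x (e : R), Kset k l -> 0 < e -> exists2 r : R, 0 < r &
     forall l' x', Kset k l' -> qnorm (qadd l (qopp l')) < r -> d x x' < r ->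
       d (sc l x) (sc l' x') < e).

Definition translation_invariant (E : zmodType) (d : E -> E -> R) (C0 : R) :=
  forall x y z : E, d (x + z) (y + z) <= d x y + C0.

Definition lipschitz_multiplicative (k : Kind) (E : zmodType)
    (sc : quat R -> E -> E) (d : E -> E -> R) (C1 C2 C3 : R) :=
  1 <= C1 /\ 0 <= C2 /\ 0 <= C3 /\
  forall l x y, Kset k l ->
    C1^-1 * qnorm l * d x y - C2 * qnorm l - C3 <= d (sc l x) (sc l y) /\
    d (sc l x) (sc l y) <= C1 * qnorm l * d x y + C2 * qnorm l + C3.

Definition lipschitz_equivalent (T : Type) (rho sigma : T -> T -> R) (A B : R) :=
  forall x y, A^-1 * sigma x y - B <= rho x y /\ rho x y <= A * sigma x y + B.

Definition averaged_distance (k : Kind) (mu : {measure set (quat R) -> \bar R})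
    (E : zmodType) (sc : quat R -> E -> E) (d : E -> E -> R) (x y : E) : R :=
  fine (\int[mu]_(u in Uset k) (d (sc u x) (sc u y))%:E)%E.
End Metric.

(* Main.v *)
Require Import Defs.
From mathcomp Require Import all_boot all_algebra all_classical all_reals all_analysis.
From mathcomp Require Import ring lra.
From mathcomp Require Import measurable_realfun.
Import GRing.Theory Num.Theory.
Import order.Order.TTheory.
Local Open Scope ring_scope.
Local Open Scope classical_set_scope.
Set Implicit Arguments. Unset Strict Implicit. Unset Printing Implicit Defensive.
Section QAlg.
Variable R : realType.
Implicit Types p q r : quat R.

Definition qconj (p : quat R) : quat R := ((p.1.1, - p.1.2), (- p.2.1, - p.2.2)).
Definition qN2 (p : quat R) : R := p.1.1 ^+ 2 + p.1.2 ^+ 2 + p.2.1 ^+ 2 + p.2.2 ^+ 2.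

Lemma qmulA p q r : qmul (qmul p q) r = qmul p (qmul q r).
Proof.
case: p => [[a1 b1] [c1 d1]]; case: q => [[a2 b2] [c2 d2]]; case: r => [[a3 b3] [c3 d3]] /=.
by congr (_, _); congr (_, _); ring.
Qed.

Lemma qN2_mul p q : qN2 (qmul p q) = qN2 p * qN2 q.
Proof.
case: p => [[a1 b1] [c1 d1]]; case: q => [[a2 b2] [c2 d2]] /=; rewrite /qN2 /=; ring.
Qed.

Lemma qN2_ge0 p : 0 <= qN2 p.
Proof. rewrite /qN2; by rewrite !addr_ge0 ?sqr_ge0. Qed.

Lemma qnormE p : qnorm p = Num.sqrt (qN2 p).
Proof. by []. Qed.

Lemma qnorm_mul p q : qnorm (qmul p q) = qnorm p * qnorm q.
Proof. by rewrite !qnormE qN2_mul sqrtrM // qN2_ge0. Qed.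

Lemma qnorm_ge0 p : 0 <= qnorm p.
Proof. exact: sqrtr_ge0. Qed.

Lemma qnorm1 p : qnorm p = 1 -> qN2 p = 1.
Proof.
rewrite qnormE => h; have := sqr_sqrtr (qN2_ge0 p); rewrite h => <-; by rewrite expr1n.
Qed.

Lemma qmul_conjl p : qnorm p = 1 -> qmul (qconj p) p = qone R.
Proof.
move=> /qnorm1; case: p => [[a b] [c e]]; rewrite /qN2 /= => h.
rewrite /qone; congr (_, _); congr (_, _); rewrite -?h; ring.
Qed.

Lemma qmul_conjr p : qnorm p = 1 -> qmul p (qconj p) = qone R.
Proof.
move=> /qnorm1; case: p => [[a b] [c e]]; rewrite /qN2 /= => h.
rewrite /qone; congr (_, _); congr (_, _); rewrite -?h; ring.
Qed.

Lemma qnorm_conj p : qnorm (qconj p) = qnorm p.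
Proof. rewrite !qnormE /qN2 /=; by rewrite !sqrrN. Qed.

Lemma qmul1 p : qmul p (qone R) = p.
Proof. case: p => [[a b] [c e]] /=; congr (_, _); congr (_, _); ring. Qed.
Lemma qmul1l p : qmul (qone R) p = p.
Proof. case: p => [[a b] [c e]] /=; congr (_, _); congr (_, _); ring. Qed.

Lemma Kset_mul k p q : Kset k p -> Kset k q -> Kset k (qmul p q).
Proof.
case: k => //=; case: p => [[a1 b1] [c1 d1]]; case: q => [[a2 b2] [c2 d2]] /=.
- by move=> [-> [-> ->]] [-> [-> ->]]; split; [|split]; ring.
- by move=> [-> ->] [-> ->]; split; ring.
Qed.

Lemma Kset_conj k p : Kset k p -> Kset k (qconj p).
Proof.
case: k => //=; case: p => [[a1 b1] [c1 d1]] /=.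
- by move=> [-> [-> ->]]; rewrite oppr0.
- by move=> [-> ->]; rewrite oppr0.
Qed.

Lemma Kset_one k : Kset k (qone R).
Proof. by case: k. Qed.

Definition qcj u l := qmul (qmul u l) (qconj u).

Lemma qcjE u l : qnorm u = 1 -> qmul (qcj u l) u = qmul u l.
Proof. move=> h; by rewrite /qcj qmulA qmul_conjl // qmul1. Qed.

Lemma qnorm_qcj u l : qnorm u = 1 -> qnorm (qcj u l) = qnorm l.
Proof. move=> h; by rewrite /qcj !qnorm_mul qnorm_conj h mul1r mulr1. Qed.

Lemma Kset_qcj k u l : Kset k u -> Kset k l -> Kset k (qcj u l).
Proof. move=> hu hl; by apply: Kset_mul; [apply: Kset_mul|apply: Kset_conj]. Qed.

End QAlg.
Section Meas.
Variable R : realType.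
Implicit Types p q : quat R.

Definition c11 (p : quat R) := p.1.1.
Definition c12 (p : quat R) := p.1.2.
Definition c21 (p : quat R) := p.2.1.
Definition c22 (p : quat R) := p.2.2.

Lemma mc11 : measurable_fun setT c11.
Proof. exact: (measurableT_comp measurable_fst measurable_fst). Qed.
Lemma mc12 : measurable_fun setT c12.
Proof. exact: (measurableT_comp measurable_snd measurable_fst). Qed.
Lemma mc21 : measurable_fun setT c21.
Proof. exact: (measurableT_comp measurable_fst measurable_snd). Qed.
Lemma mc22 : measurable_fun setT c22.
Proof. exact: (measurableT_comp measurable_snd measurable_snd). Qed.

Lemma mpre (h : quat R -> R) (B : set R) :
  measurable_fun setT h -> measurable B -> measurable (h @^-1` B).
Proof. by move=> mh mB; rewrite -[_ @^-1` _]setTI; apply: mh. Qed.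

Lemma measurable_Kset k : measurable (@Kset R k).
Proof.
case: k => /=.
- rewrite (_ : [set q | _] = c12 @^-1` [set 0] `&` (c21 @^-1` [set 0] `&` c22 @^-1` [set 0])) //.
  by apply: measurableI; [|apply: measurableI]; apply: mpre; first [exact: mc12|exact: mc21|exact: mc22|exact: measurable_set1].
- rewrite (_ : [set q | _] = c21 @^-1` [set 0] `&` c22 @^-1` [set 0]) //.
  by apply: measurableI; apply: mpre; first [exact: mc12|exact: mc21|exact: mc22|exact: measurable_set1].
- exact: measurableT.
Qed.

Lemma mqN2 : measurable_fun setT (@qN2 R).
Proof.
rewrite /qN2.
apply: measurable_realfun.measurable_funD; [apply: measurable_realfun.measurable_funD; [apply: measurable_realfun.measurable_funD|]|];
  apply: measurable_realfun.measurable_funX; [exact: mc11|exact: mc12|exact: mc21|exact: mc22].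
Qed.

Lemma qnorm1E (p : quat R) : (qnorm p = 1) <-> (qN2 p = 1).
Proof.
split; first exact: qnorm1.
by rewrite qnormE => ->; rewrite sqrtr1.
Qed.

Lemma measurable_Uset k : measurable (@Uset R k).
Proof.
rewrite (_ : @Uset R k = @Kset R k `&` (@qN2 R) @^-1` [set 1]).
  apply: measurableI; first exact: measurable_Kset.
  apply: mpre; [exact: mqN2|exact: measurable_set1].
rewrite /Uset; apply/seteqP; split => u /= [h1 h2]; split => //; apply/qnorm1E; exact: h2.
Qed.

End Meas.
Section Round.
Variable R : realType.
Implicit Types p q : quat R.

Definition Nn (n : nat) : R := n.+1%:R.
Definition zq := ((int * int) * (int * int))%type.
Definition flq n p : zq :=
  ((Num.floor (p.1.1 * Nn n), Num.floor (p.1.2 * Nn n)),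
   (Num.floor (p.2.1 * Nn n), Num.floor (p.2.2 * Nn n))).
Definition ptq n (z : zq) : quat R :=
  ((z.1.1%:~R / Nn n, z.1.2%:~R / Nn n), (z.2.1%:~R / Nn n, z.2.2%:~R / Nn n)).
Definition rq n p := ptq n (flq n p).

Definition Fl n (a : int) : set R := [set t | Num.floor (t * Nn n) = a].

Lemma measurable_Fl n a : measurable (Fl n a).
Proof.
rewrite (_ : Fl n a = (fun t => t * Nn n) @^-1` `[a%:~R, (a + 1)%:~R[).
  rewrite -[_ @^-1` _]setTI.
  apply: (@measurable_realfun.mulrr_measurable R setT (Nn n)); [exact: measurableT|exact: measurable_itv].
apply/seteqP; split => t /=.
  by move=> h; rewrite /= in_itv /=; rewrite -floor_eq h.
by rewrite in_itv /= -floor_eq => /eqP.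
Qed.

Lemma measurable_cell n (z : zq) : measurable (flq n @^-1` [set z]).
Proof.
rewrite (_ : flq n @^-1` [set z] =
  (@c11 R @^-1` Fl n z.1.1 `&` @c12 R @^-1` Fl n z.1.2) `&`
  (@c21 R @^-1` Fl n z.2.1 `&` @c22 R @^-1` Fl n z.2.2)).
  apply: measurableI; apply: measurableI; apply: mpre;
   first [exact: mc11|exact: mc12|exact: mc21|exact: mc22|exact: measurable_Fl].
apply/seteqP; split => p /=.
  by move=> <-.
case: z => [[a b] [c e]] /= [[h1 h2] [h3 h4]].
by rewrite /flq; move: h1 h2 h3 h4; rewrite /Fl /c11 /c12 /c21 /c22 /= => -> -> -> ->.
Qed.

Lemma measurable_rq n (D : set (quat R)) (g : quat R -> R) :
  measurable D -> measurable_fun D (g \o rq n).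
Proof.
move=> mD mD2 B mB; apply: measurableI => //.
pose S (m : nat) : set (quat R) := match unpickle m with
  | Some z => if pselect (B (g (ptq n z))) then flq n @^-1` [set z] else set0
  | None => set0 end.
rewrite (_ : (g \o rq n) @^-1` B = \bigcup_m S m).
  apply: bigcupT_measurable => m; rewrite /S.
  case: (unpickle m) => [z|]; last exact: measurable0.
  by case: pselect => ?; [exact: measurable_cell|exact: measurable0].
apply/seteqP; split => p /=.
  move=> Bp; exists (pickle (flq n p)); first exact: I.
  rewrite /S.
  have -> : unpickle (pickle (flq n p)) = Some (flq n p) by exact: pickleK.
  by case: pselect.
move=> [m _]; rewrite /S; case: (unpickle m) => [z|]; last by [].
by case: pselect => // Bz /= h; rewrite /rq h.
Qed.


Lemma Nn_gt0 n : 0 < Nn n.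
Proof. by rewrite /Nn ltr0n. Qed.

Lemma rd_bounds n (t : R) :
  (Num.floor (t * Nn n))%:~R / Nn n <= t /\ t < (Num.floor (t * Nn n))%:~R / Nn n + 1 / Nn n.
Proof.
have /andP[h1 h2] := floor_itv (t * Nn n).
have hN := Nn_gt0 n.
split.
  by rewrite ler_pdivrMr.
rewrite -mulrDl ltr_pdivlMr //.
by move: h2; rewrite intrD.
Qed.

Lemma rq_Kset k n u : Kset k u -> Kset k (rq n u).
Proof.
case: k => //=; case: u => [[a b] [c e]] /=.
- by move=> [-> [-> ->]]; rewrite !mul0r floor0 !mul0r.
- by move=> [-> ->]; rewrite !mul0r floor0 !mul0r.
Qed.

Lemma rq_close u (r : R) : 0 < r ->
  \forall n \near \oo, qnorm (qadd u (qopp (rq n u))) < r.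
Proof.
move=> r0.
have [N hN] : exists N : nat, 2 / r < N%:R.
  exists (Num.trunc (2 / r)).+1; exact: truncnS_gt.
near=> n.
have nN : (N <= n)%N by near: n; exact: nbhs_infty_ge.
have hs : 2 / Nn n < r.
  rewrite ltr_pdivrMr ?Nn_gt0 // mulrC -ltr_pdivrMr //.
  apply: (lt_le_trans hN); rewrite /Nn ler_nat; exact: leqW.
set s := 1 / Nn n.
have s0 : 0 < s by rewrite /s divr_gt0 ?Nn_gt0.
have hs' : 2 * s < r by rewrite /s mulrA mulr1.
case: u => [[a b] [c e]].
rewrite qnormE /qN2 /qadd /qopp /rq /ptq /flq /=.
have [a1 a2] := rd_bounds n a; have [b1 b2] := rd_bounds n b.
have [c1 c2] := rd_bounds n c; have [e1 e2] := rd_bounds n e.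
rewrite -/s in a2 b2 c2 e2.
set A := _ / Nn n in a1 a2 *; set B := _ / Nn n in b1 b2 *.
set C := _ / Nn n in c1 c2 *; set D := _ / Nn n in e1 e2 *.
have -> : r = Num.sqrt (r ^+ 2) by rewrite sqrtr_sqr gtr0_norm.
rewrite ltr_sqrt ?exprn_gt0 //.
have sq (x y : R) : x <= y -> y < x + s -> (y + - x) ^+ 2 < s ^+ 2.
  move=> h1 h2; rewrite -subr_gt0 subr_sqr; apply: mulr_gt0; lra.
have := sq _ _ a1 a2; have := sq _ _ b1 b2; have := sq _ _ c1 c2; have := sq _ _ e1 e2.
have : 4 * s ^+ 2 < r ^+ 2.
  have -> : 4 * s ^+ 2 = (2 * s) ^+ 2 by rewrite !expr2; ring.
  rewrite -subr_gt0 subr_sqr; apply: mulr_gt0; lra.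
lra.
Unshelve. all: by end_near.
Qed.

Lemma cont_measurable k (f : quat R -> R) :
  (forall u, Kset k u -> forall e, 0 < e -> exists2 r, 0 < r &
     forall u', Kset k u' -> qnorm (qadd u (qopp u')) < r -> `|f u - f u'| < e) ->
  measurable_fun (Kset k) f.
Proof.
move=> hc; apply: (@measurable_realfun.measurable_fun_cvg _ _ _ _ (fun n => f \o rq n)).
  move=> m; apply: measurable_rq; exact: measurable_Kset.
move=> u Ku; apply/cvgrPdist_lt => e e0.
have [r r0 hr] := hc u Ku e e0.
near=> n; apply: hr; first exact: rq_Kset.
near: n; exact: rq_close.
Unshelve. all: by end_near.
Qed.
End Round.

Section Gen.
Context dT (T : measurableType dT) (R : realType) (mu : {measure set T -> \bar R}).
Variables (U : set T) (mU : measurable U) (mu1 : mu U = 1%E).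

Definition okf (f : T -> R) := measurable_fun U f /\ exists M, forall u, U u -> `|f u| <= M.

Lemma okf_int f : okf f -> mu.-integrable U (EFin \o f).
Proof.
move=> [mf [M hM]]; apply: measurable_bounded_integrable => //.
  by rewrite mu1 ltry.
exists M; split; first exact: num_real.
move=> M' hM' u Uu /=; apply: le_trans (hM u Uu) _; exact: ltW.
Qed.

Lemma okf_cst c : okf (fun=> c).
Proof. split; first exact: measurable_cst. by exists `|c|. Qed.

Lemma okf_Z f a : okf f -> okf (fun u => a * f u).
Proof.
move=> [mf [M hM]]; split.
  apply: measurable_realfun.measurable_funM => //; exact: measurable_cst.
exists (`|a| * M) => u Uu; rewrite normrM; by apply: ler_wpM2l => //; apply: hM.
Qed.

Lemma okf_D f g : okf f -> okf g -> okf (fun u => f u + g u).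
Proof.
move=> [mf [M hM]] [mg [N hN]]; split.
  exact: measurable_realfun.measurable_funD.
exists (M + N) => u Uu; apply: le_trans (ler_normD _ _) _; apply: lerD; [exact: hM|exact: hN].
Qed.

Lemma okf_lin f a b : okf f -> okf (fun u => a * f u + b).
Proof. by move=> hf; apply: okf_D; [apply: okf_Z|apply: okf_cst]. Qed.

Lemma RintC c : \int[mu]_(u in U) c = c.
Proof. by rewrite Rintegral_cst // mu1 /= mulr1. Qed.

Lemma Rint_lin f a b : okf f ->
  \int[mu]_(u in U) (a * f u + b) = a * \int[mu]_(u in U) f u + b.
Proof.
move=> hf; rewrite RintegralD //.
- by rewrite RintegralZl ?RintC //; apply: okf_int.
- exact: okf_int (okf_Z a hf).
- exact: okf_int (okf_cst b).
Qed.

Lemma Rint_le f g : okf f -> okf g -> (forall u, U u -> f u <= g u) ->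
  \int[mu]_(u in U) f u <= \int[mu]_(u in U) g u.
Proof. by move=> hf hg hfg; apply: le_Rintegral => //; apply: okf_int. Qed.

Lemma Rint_D f g : okf f -> okf g ->
  \int[mu]_(u in U) (f u + g u) = \int[mu]_(u in U) f u + \int[mu]_(u in U) g u.
Proof. by move=> hf hg; apply: RintegralD => //; apply: okf_int. Qed.


Lemma Pos (f : nat -> T -> R) : (forall n, okf (f n)) ->
  (forall n u, U u -> 0 <= f n u) ->
  (forall u, U u -> exists2 c, 0 < c & forall n, c <= f n u) ->
  exists2 c, 0 < c & forall n, c <= \int[mu]_(u in U) f n u.
Proof.
move=> hok h0 hc.
pose A (m : nat) := \bigcap_n (U `&` f n @^-1` `[(m.+1%:R)^-1, +oo[).
have mA m : measurable (A m).
  apply: bigcapT_measurable => n; have [mf _] := hok n.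
  by apply: mf => //; exact: measurable_itv.
have AU m : A m `<=` U by move=> u /(_ 0%N I) [].
have cov : U `<=` \bigcup_m A m.
  move=> u Uu; have [c c0 hcn] := hc u Uu.
  exists (Num.trunc c^-1) => // n _; split => //=.
  rewrite in_itv /= andbT; apply: le_trans (hcn n).
  rewrite -[X in _ <= X](invrK c) lef_pV2 ?posrE ?invr_gt0 //.
  apply: ltW; exact: truncnS_gt.
have [m hm] : exists m, mu (A m) != 0%E.
  apply: contrapT => hn.
  have h i : mu (A i) = 0%E by apply/eqP; apply: contrapT => /negP hi; apply: hn; exists i.
  have : (mu U <= \sum_(n <oo) mu (A n))%E by apply: measure_sigma_subadditive.
  rewrite eseries0 ?mu1 ?lee_fin ?ler10 //.
have muA0 : (0 <= mu (A m))%E by apply: measure_ge0.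
have muA1 : (mu (A m) <= 1)%E by rewrite -mu1; apply: le_measure => //; rewrite inE.
have finA : mu (A m) \is a fin_num by rewrite ge0_fin_numE // (le_lt_trans muA1) ?ltry.
exists ((m.+1%:R)^-1 * fine (mu (A m))).
  apply: mulr_gt0; first by rewrite invr_gt0 ltr0n.
  apply: fine_gt0; apply/andP; split; first by rewrite lt_def hm muA0.
  by rewrite (le_lt_trans muA1) ?ltry.
move=> n; have [mfn _] := hok n.
have mfE : measurable_fun U (EFin \o f n) by apply/measurable_realfun.measurable_EFinP.
have hU : ((m.+1%:R^-1 * fine (mu (A m)))%:E <= \int[mu]_(u in U) (f n u)%:E)%E.
  rewrite EFinM fineK //.
  have e1 : ((m.+1%:R^-1)%:E * mu (A m) = \int[mu]_(u in A m) ((m.+1%:R^-1)%:E))%E.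
    by rewrite integral_cst.
  have e2 : (\int[mu]_(u in A m) ((m.+1%:R^-1)%:E) <= \int[mu]_(u in A m) (f n u)%:E)%E.
    apply: ge0_le_integral.
    - exact: mA.
    - by move=> u _; rewrite lee_fin invr_ge0.
    - exact: measurable_cst.
    - exact: measurable_funS mfE.
    - move=> u /(_ n I) [_ /=]; by rewrite in_itv /= andbT lee_fin.
  have e3 : (\int[mu]_(u in A m) (f n u)%:E <= \int[mu]_(u in U) (f n u)%:E)%E.
    apply: ge0_subset_integral => //.
    by move=> u Uu; rewrite lee_fin; apply: h0.
  rewrite e1; exact: le_trans e2 e3.
have fin := integrable_fin_num mU (okf_int (hok n)).
have := fine_le _ fin hU; apply; by [].
Qed.

Lemma Van (f : nat -> T -> R) B : (forall n, measurable_fun U (f n)) ->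
  (forall n u, U u -> 0 <= f n u <= B) ->
  (forall u, U u -> f ^~ u @ \oo --> 0) ->
  (fun n => \int[mu]_(u in U) f n u) @ \oo --> 0.
Proof.
move=> mf hb hc.
have h1 : forall n, measurable_fun U (EFin \o f n).
  by move=> n; apply/measurable_EFinP.
have h2 : measurable_fun U (cst (0 : \bar R)) by exact: measurable_cst.
have h3 : {ae mu, forall x, U x -> (EFin \o f x0) x @[x0 --> \oo] --> cst (0 : \bar R) x}.
  apply: aeW => u Uu; apply: cvg_EFin; [exact: nearW|exact: hc u Uu].
have h4 : mu.-integrable U (EFin \o (fun=> B)) by exact: okf_int (okf_cst B).
have h5 : {ae mu, forall x n, U x -> (`|(EFin \o f n) x| <= (EFin \o (fun=> B)) x)%E}.
  apply: aeW => u n Uu; have /andP[g1 g2] := hb n u Uu.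
  by rewrite /= lee_fin ger0_norm.
have [_ _] := @dominated_convergence _ _ _ mu U mU _ _ _ h1 h2 h3 h4 h5.
rewrite integral0 => /fine_cvgP [_ h]; exact: h.
Qed.
End Gen.
Lemma inv_small (R : realType) (r : R) : 0 < r -> \forall n \near \oo, n.+1%:R^-1 < r.
Proof.
move=> r0; near=> n.
have hN : r^-1 < (Num.trunc r^-1).+1%:R by exact: truncnS_gt.
have nN : (Num.trunc r^-1 <= n)%N by near: n; exact: nbhs_infty_ge.
rewrite -[X in _ < X](invrK r) ltf_pV2 ?posrE ?invr_gt0 ?ltr0n //.
apply: (lt_le_trans hN); by rewrite ler_nat ltnS.
Unshelve. all: by end_near.
Qed.

Section Main.
Variables (R : realType) (k : Kind) (E : zmodType) (sc : quat R -> E -> E)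
  (d : E -> E -> R) (C0 C1 C2 C3 : R) (mu : {measure set (quat R) -> \bar R}).
Hypothesis hmvs : metric_vector_space k sc d.
Hypothesis hlm : lipschitz_multiplicative k sc d C1 C2 C3.
Hypothesis hmu : mu (@Uset R k) = 1%E.

Let U := @Uset R k.
Let mU : measurable U := @measurable_Uset R k.

Lemma d_ge0 x y : 0 <= d x y. Proof. by case: hmvs => [[h _] _]. Qed.
Lemma d_eq0 x y : d x y = 0 <-> x = y. Proof. by case: hmvs => [[_ [h _]] _]. Qed.
Lemma d_sym x y : d x y = d y x. Proof. by case: hmvs => [[_ [_ [h _]]] _]. Qed.
Lemma d_tri x y z : d x z <= d x y + d y z. Proof. by case: hmvs => [[_ [_ [_ h]]] _]. Qed.
Lemma d_xx x : d x x = 0. Proof. by apply/d_eq0. Qed.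

Lemma scA l m x : Kset k l -> Kset k m -> sc (qmul l m) x = sc l (sc m x).
Proof. by case: hmvs => [_ [[_ [_ [h _]]] _]]; apply: h. Qed.
Lemma sc1 x : sc (qone R) x = x.
Proof. by case: hmvs => [_ [[_ [_ [_ h]]] _]]; apply: h. Qed.
Lemma scD l x y : Kset k l -> sc l (x + y) = sc l x + sc l y.
Proof. by case: hmvs => [_ [[_ [h _]] _]]; apply: h. Qed.
Lemma hcont l x e : Kset k l -> 0 < e -> exists2 r : R, 0 < r &
     forall l' x', Kset k l' -> qnorm (qadd l (qopp l')) < r -> d x x' < r ->
       d (sc l x) (sc l' x') < e.
Proof. by case: hmvs => [_ [_ [_ h]]]; apply: h. Qed.

Lemma qnorm_sub0 (l : quat R) : qnorm (qadd l (qopp l)) = 0.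
Proof. by rewrite qnormE /qN2 /= !subrr expr0n /= !addr0 sqrtr0. Qed.

Lemma Uset_K u : U u -> Kset k u. Proof. by case. Qed.
Lemma Uset_n u : U u -> qnorm u = 1. Proof. by case. Qed.

Lemma sc_inv u x : U u -> sc (qconj u) (sc u x) = x.
Proof.
move=> Uu; rewrite -scA ?qmul_conjl ?sc1 //; [exact: Uset_n|apply: Kset_conj|]; exact: Uset_K.
Qed.

Definition G x y (u : quat R) := d (sc u x) (sc u y).

Lemma d_diff a b a' b' : `|d a b - d a' b'| <= d a a' + d b b'.
Proof.
have h1 := d_tri a a' b; have h2 := d_tri a' b' b.
have h3 := d_tri a' a b'; have h4 := d_tri a b b'.
rewrite (d_sym a' a) in h3; rewrite (d_sym b' b) in h2.
rewrite ler_norml; apply/andP; split; lra.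
Qed.

Lemma G_cont x y u : Kset k u -> forall e, 0 < e -> exists2 r, 0 < r &
  forall u', Kset k u' -> qnorm (qadd u (qopp u')) < r -> `|G x y u - G x y u'| < e.
Proof.
move=> Ku e e0.
have e2 : 0 < e / 2 by rewrite divr_gt0.
have [r1 r10 h1] := hcont x Ku e2.
have [r2 r20 h2] := hcont y Ku e2.
exists (Num.min r1 r2); first by rewrite lt_min r10 r20.
move=> u' Ku' hu'; move: hu'; rewrite lt_min => /andP[hu1 hu2].
have := h1 u' x Ku' hu1; rewrite d_xx => /(_ r10) a1.
have := h2 u' y Ku' hu2; rewrite d_xx => /(_ r20) a2.
apply: le_lt_trans (d_diff _ _ _ _) _; rewrite /G; lra.
Qed.

Lemma G_okf x y : okf U (G x y).
Proof.
split.
  apply: (measurable_funS (@measurable_Kset R k)); first by move=> u [].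
  apply: cont_measurable => u Ku; exact: G_cont.
case: hlm => _ [_ [_ h]].
exists (C1 * d x y + C2 + C3) => u Uu.
rewrite ger0_norm ?d_ge0 //.
have [_ h2] := h u x y (Uset_K Uu); by rewrite (Uset_n Uu) !mulr1 in h2.
Qed.

End Main.

Section Main2.
Variables (R : realType) (k : Kind) (E : zmodType) (sc : quat R -> E -> E)
  (d : E -> E -> R) (C0 C1 C2 C3 : R) (mu : {measure set (quat R) -> \bar R}).
Hypothesis hmvs : metric_vector_space k sc d.
Hypothesis hlm : lipschitz_multiplicative k sc d C1 C2 C3.
Hypothesis hmu : mu (@Uset R k) = 1%E.

Let U := @Uset R k.
Let mU : measurable U := @measurable_Uset R k.
Let d0 := averaged_distance k mu sc d.
Let Gf := G sc d.
Let okG x y : okf U (Gf x y) := G_okf hmvs hlm x y.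

Lemma d0E x y : d0 x y = \int[mu]_(u in U) Gf x y u.
Proof. by []. Qed.

Lemma d0_ge0 x y : 0 <= d0 x y.
Proof. rewrite d0E; apply: Rintegral_ge0 => u _; exact: (d_ge0 hmvs). Qed.

Lemma d0_sym x y : d0 x y = d0 y x.
Proof. rewrite !d0E; apply: eq_Rintegral => u _; by rewrite /Gf /G (d_sym hmvs). Qed.

Lemma d0_tri x y z : d0 x z <= d0 x y + d0 y z.
Proof.
rewrite !d0E -(Rint_D mU hmu (okG x y) (okG y z)).
apply: (Rint_le mU hmu (okG x z) (okf_D (okG x y) (okG y z))) => u _.
exact: (d_tri hmvs).
Qed.

Lemma d0_xx x : d0 x x = 0.
Proof.
rewrite d0E -[RHS](RintC mU hmu); apply: eq_Rintegral => u _.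
by rewrite /Gf /G (d_xx hmvs).
Qed.

Lemma d0_eq0 x y : d0 x y = 0 <-> x = y.
Proof.
split; last by move=> ->; exact: d0_xx.
move=> h; apply: contrapT => nxy.
have pos : forall u, U u -> exists2 c, 0 < c & forall n : nat, c <= Gf x y u.
  move=> u Uu; exists (Gf x y u) => //.
  rewrite lt_def (d_ge0 hmvs) andbT; apply/eqP => /(d_eq0 hmvs) e.
  by apply: nxy; rewrite -(sc_inv hmvs x Uu) e (sc_inv hmvs y Uu).
have [c c0 hc] := Pos mU hmu (f := fun _ : nat => Gf x y) (fun=> okG x y)
  (fun _ u _ => d_ge0 hmvs _ _) pos.
have := hc 0%N; rewrite -d0E h => hc0.
by have := lt_le_trans c0 hc0; rewrite ltxx.
Qed.


Lemma d0_equiv x y : C1^-1 * d x y - (C2 + C3) <= d0 x y /\ d0 x y <= C1 * d x y + (C2 + C3).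
Proof.
case: hlm => _ [_ [_ h]].
split.
- rewrite d0E -[X in X <= _](RintC mU hmu).
  apply: (Rint_le mU hmu (okf_cst _ _) (okG x y)) => u Uu.
  have [h1 _] := h u x y (Uset_K Uu); rewrite (Uset_n Uu) !mulr1 in h1.
  rewrite /Gf /G; lra.
- rewrite d0E -[X in _ <= X](RintC mU hmu).
  apply: (Rint_le mU hmu (okG x y) (okf_cst _ _)) => u Uu.
  have [_ h1] := h u x y (Uset_K Uu); rewrite (Uset_n Uu) !mulr1 in h1.
  rewrite /Gf /G; lra.
Qed.

Hypothesis hti : translation_invariant d C0.

Lemma d0_ti x y z : d0 (x + z) (y + z) <= d0 x y + C0.
Proof.
have e := Rint_lin mU hmu 1 C0 (okG x y); rewrite mul1r in e.
rewrite !d0E -e.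
apply: (Rint_le mU hmu (okG (x + z) (y + z)) (okf_lin 1 C0 (okG x y))) => u Uu.
rewrite mul1r /Gf /G !(scD hmvs _ _ (Uset_K Uu)); exact: hti.
Qed.

Lemma G_sc l x y u : Kset k l -> U u ->
  Gf (sc l x) (sc l y) u = d (sc (qcj u l) (sc u x)) (sc (qcj u l) (sc u y)).
Proof.
move=> Kl Uu; have Ku := Uset_K Uu; have Kq := Kset_qcj Ku Kl.
rewrite /Gf /G -!(scA hmvs _ Ku Kl) -!(scA hmvs _ Kq Ku).
by rewrite qcjE //; apply: Uset_n Uu.
Qed.

Lemma d0_mult l x y : Kset k l ->
  C1^-1 * qnorm l * d0 x y - C2 * qnorm l - C3 <= d0 (sc l x) (sc l y) /\
  d0 (sc l x) (sc l y) <= C1 * qnorm l * d0 x y + C2 * qnorm l + C3.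
Proof.
move=> Kl; case: hlm => _ [_ [_ h]].
split.
- pose a := C1^-1 * qnorm l; pose b := - (C2 * qnorm l) - C3.
  have e := Rint_lin mU hmu a b (okG x y).
  have -> : C1^-1 * qnorm l * d0 x y - C2 * qnorm l - C3 = a * d0 x y + b by rewrite /a /b; ring.
  rewrite [d0 x y]d0E -e [d0 _ _]d0E.
  apply: (Rint_le mU hmu (okf_lin a b (okG x y)) (okG (sc l x) (sc l y))) => u Uu.
  rewrite G_sc //.
  have Kq := Kset_qcj (Uset_K Uu) Kl.
  have [h1 _] := h _ (sc u x) (sc u y) Kq; rewrite qnorm_qcj in h1; last exact: (Uset_n Uu).
  rewrite /a /b /Gf /G; lra.
- pose a := C1 * qnorm l; pose b := C2 * qnorm l + C3.
  have e := Rint_lin mU hmu a b (okG x y).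
  have -> : C1 * qnorm l * d0 x y + C2 * qnorm l + C3 = a * d0 x y + b by rewrite /a /b; ring.
  rewrite [d0 x y]d0E -e [d0 _ _]d0E.
  apply: (Rint_le mU hmu (okG (sc l x) (sc l y)) (okf_lin a b (okG x y))) => u Uu.
  rewrite G_sc //.
  have Kq := Kset_qcj (Uset_K Uu) Kl.
  have [_ h1] := h _ (sc u x) (sc u y) Kq; rewrite qnorm_qcj in h1; last exact: (Uset_n Uu).
  rewrite /a /b /Gf /G; lra.
Qed.


Lemma T1 x r : 0 < r -> exists2 r', 0 < r' & forall y, d0 x y < r' -> d x y < r.
Proof.
move=> r0; apply: contrapT => hn.
have h n : exists y, d0 x y < n.+1%:R^-1 /\ r <= d x y.
  apply: contrapT => hny; apply: hn; exists n.+1%:R^-1; first by rewrite invr_gt0 ltr0n.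
  move=> y hy; rewrite ltNge; apply/negP => hry; apply: hny; by exists y.
have [yn hyn] := choice h.
have pos : forall u, U u -> exists2 c, 0 < c & forall n : nat, c <= Gf x (yn n) u.
  move=> u Uu; have Ku := Uset_K Uu.
  have [rho rho0 hr] := hcont hmvs (sc u x) (Kset_conj Ku) r0.
  exists rho => // n; rewrite leNgt; apply/negP => hlt.
  have := hr (qconj u) (sc u (yn n)) (Kset_conj Ku).
  rewrite qnorm_sub0 => /(_ rho0 hlt); rewrite !(sc_inv hmvs _ Uu).
  have [_ H] := hyn n => H2.
  by have := le_lt_trans H H2; rewrite ltxx.
have [c c0 hc] := Pos mU hmu (f := fun n => Gf x (yn n)) (fun n => okG x (yn n))
  (fun _ u _ => d_ge0 hmvs _ _) pos.
have [N _ hN] := inv_small c0.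
have b := hN N (leqnn N); have [h1 _] := hyn N; have a := hc N; rewrite -d0E in a.
by have := lt_trans (le_lt_trans a h1) b; rewrite ltxx.
Qed.

Lemma T2 x r0 : 0 < r0 -> exists2 r, 0 < r & forall y, d x y < r -> d0 x y < r0.
Proof.
move=> r00; apply: contrapT => hn.
have h n : exists y, d x y < n.+1%:R^-1 /\ r0 <= d0 x y.
  apply: contrapT => hny; apply: hn; exists n.+1%:R^-1; first by rewrite invr_gt0 ltr0n.
  move=> y hy; rewrite ltNge; apply/negP => hry; apply: hny; by exists y.
have [yn hyn] := choice h.
case: hlm => C11 [C20 [C30 hl]].
have bnd : forall n u, U u -> 0 <= Gf x (yn n) u <= C1 + C2 + C3.
  move=> n u Uu; rewrite (d_ge0 hmvs) /=.
  have [_ h2] := hl u x (yn n) (Uset_K Uu); rewrite (Uset_n Uu) !mulr1 in h2.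
  have hd1 : d x (yn n) <= 1.
    have [h1 _] := hyn n; apply: ltW; apply: lt_le_trans h1 _.
    by rewrite invf_le1 ?ler1n ?ltr0n.
  have := ler_wpM2l (le_trans ler01 C11) hd1; rewrite mulr1 => h3.
  rewrite /Gf /G; lra.
have conv : forall u, U u -> (fun n => Gf x (yn n)) ^~ u @ \oo --> 0.
  move=> u Uu; apply/cvgrPdist_lt => e e0.
  have [rho rho0 hr] := hcont hmvs x (Uset_K Uu) e0.
  near=> n; rewrite sub0r normrN ger0_norm ?(d_ge0 hmvs) //.
  have := hr u (yn n) (Uset_K Uu); rewrite qnorm_sub0 => /(_ rho0); apply.
  have [h1 _] := hyn n; apply: lt_trans h1 _; near: n; exact: inv_small.
have := Van mU hmu (f := fun n => Gf x (yn n)) (fun n => (okG x (yn n)).1) bnd conv.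
move=> /cvgrPdist_lt /(_ r0 r00) [N _ hN].
have := hN N (leqnn N); rewrite /= sub0r normrN ger0_norm; last by apply: Rintegral_ge0 => u _; exact: (d_ge0 hmvs).
have [_ h2] := hyn N; rewrite d0E in h2 => h3.
by have := le_lt_trans h2 h3; rewrite ltxx.
Unshelve. all: by end_near.
Qed.

End Main2.

Theorem lemma2 (R : realType) (k : Kind) (E : zmodType)
    (sc : quat R -> E -> E) (d : E -> E -> R) (C0 C1 C2 C3 : R)
    (mu : {measure set (quat R) -> \bar R}) :
  metric_vector_space k sc d ->
  translation_invariant d C0 ->
  lipschitz_multiplicative k sc d C1 C2 C3 ->
  (* mu is the right-invariant Haar probability measure on U *)
  mu (Uset k) = 1%E ->
  (forall v, Uset k v -> forall A, measurable A -> A `<=` Uset k ->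
     mu [set u | A (qmul u v)] = mu A) ->
  let d0 := averaged_distance k mu sc d in
  is_distance d0 /\
  lipschitz_equivalent d0 d C1 (C2 + C3) /\
  translation_invariant d0 C0 /\
  lipschitz_multiplicative k sc d0 C1 C2 C3 /\
  (forall A : set E, metric_open d A <-> metric_open d0 A).
Proof.
move=> hmvs hti hlm hmu _ d0.
split; [|split; [|split; [|split]]].
- split; first by move=> x y; exact: (d0_ge0 mu hmvs).
  split; first by move=> x y; exact: (d0_eq0 hmvs hlm hmu).
  split; first by move=> x y; exact: (d0_sym mu hmvs).
  by move=> x y z; exact: (d0_tri hmvs hlm hmu).
- move=> x y; exact: (d0_equiv hmvs hlm hmu).
- move=> x y z; exact: (d0_ti hmvs hlm hmu hti).
- have [h1 [h2 [h3 _]]] := hlm; split => //; split => //; split => //.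
  move=> l x y Kl; exact: (d0_mult hmvs hlm hmu x y Kl).
- move=> A; split => hA x Ax.
  + have [r r0 hr] := hA x Ax; have [r' r'0 hr'] := T1 hmvs hlm hmu x r0.
    by exists r' => // y /hr' /hr.
  + have [r0 r00 hr] := hA x Ax; have [r r1 hr'] := T2 hmvs hlm hmu x r00.
    by exists r => // y /hr' /hr.
Qed.
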